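(* Let $X$ be a real Banach space and let $M\subset X\times X^*$ be a linear subspace (a linear point-to-set operator $M:X\rightrightarrows X^*$). Then: (1) if $M$ is skew, then $M$ is maximal self-cancelling; (2) if $M$ is maximal self-cancelling and $D(M)$ is closed, then $M$ is skew; (3) if $M$ is maximal self-cancelling, $R(M)$ is closed and $X$ is reflexive, then $M$ is skew.
   Context: $\langle x,x^*\rangle=x^*(x)$. For $B\subset X\times X^*$, $B^\vdash=\{(y,y^* )\mid \langle x,y^*\rangle+\langle y,x^*\rangle=0\ \forall (x,x^* )\in B\}$ and $-B=\{(x,-x^* )\mid (x,x^* )\in B\}$. The adjoint of a linear $M$ is $M^*=(-M)^\vdash$, and $M$ is skew if $M=-M^*$ (equivalently $M=M^\vdash$). $M$ is self-cancelling if it is a linear subspace with $\langle x,x^*\rangle=0$ for all $(x,x^* )\in M$, and maximal self-cancelling if it is self-cancelling and not properly contained in any self-cancelling subset of $X\times X^*$. $D(M)=\{x\mid \exists x^*,\ (x,x^* )\in M\}$ and $R(M)=\{x^*\mid \exists x,\ (x,x^* )\in M\}$. *)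

(* Defs.v *)
From HB Require Import structures.
From mathcomp Require Import all_boot all_order all_algebra.
From mathcomp Require Import all_classical all_reals all_analysis.
Set Implicit Arguments. Unset Strict Implicit. Unset Printing Implicit Defensive.
Import Order.TTheory GRing.Theory Num.Theory.
Import numFieldNormedType.Exports.
Local Open Scope classical_set_scope.
Local Open Scope ring_scope.

Section Defs.
Variables (R : realType) (X : normedModType R).

(* X^* : bounded (= continuous) linear functionals X -> R, represented as
   functions X -> R satisfying the predicate [is_dual]. *)
Definition is_linear_fun (f : X -> R) : Prop :=
  forall (a b : R) (x y : X), f (a *: x + b *: y) = a * f x + b * f y.

Definition is_dual (f : X -> R) : Prop :=
  is_linear_fun f /\ exists C : R, forall x : X, `|f x| <= C * `|x|.

Definition in_XXs (B : set (X * (X -> R))) : Prop :=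
  forall p, B p -> is_dual p.2.

Definition pair_ (x : X) (xs : X -> R) : R := xs x.

Definition perp (B : set (X * (X -> R))) : set (X * (X -> R)) :=
  [set q | is_dual q.2 /\
     forall p, B p -> pair_ p.1 q.2 + pair_ q.1 p.2 = 0].

Definition negB (B : set (X * (X -> R))) : set (X * (X -> R)) :=
  [set q | exists p, B p /\ q = (p.1, fun x => - p.2 x)].

Definition adjoint (M : set (X * (X -> R))) := perp (negB M).

Definition skew_op (M : set (X * (X -> R))) : Prop := M = negB (adjoint M).

Definition is_subspace (M : set (X * (X -> R))) : Prop :=
  M (0, fun _ => 0) /\
  forall (a b : R) p q, M p -> M q ->
    M (a *: p.1 + b *: q.1, fun x => a * p.2 x + b * q.2 x).

Definition self_cancelling (M : set (X * (X -> R))) : Prop :=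
  in_XXs M /\ is_subspace M /\ forall p, M p -> pair_ p.1 p.2 = 0.

Definition max_self_cancelling (M : set (X * (X -> R))) : Prop :=
  self_cancelling M /\
  forall N : set (X * (X -> R)),
    in_XXs N -> self_cancelling N -> M `<=` N -> N = M.

Definition dom_op (M : set (X * (X -> R))) : set X :=
  [set x | exists xs, M (x, xs)].
Definition ran_op (M : set (X * (X -> R))) : set (X -> R) :=
  [set xs | exists x, M (x, xs)].

(* closedness in X^* for the dual norm ||f|| = sup_{||x||<=1} |f x| *)
Definition dual_closed (S : set (X -> R)) : Prop :=
  forall f, is_dual f ->
    (forall eps : R, 0 < eps -> exists g, S g /\
       forall x : X, `|x| <= 1 -> `|f x - g x| <= eps) -> S f.

(* X^** : linear functionals on X^* bounded for the dual norm;
   reflexive: the canonical embedding X -> X^** is onto. *)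
Definition is_bidual (phi : (X -> R) -> R) : Prop :=
  (forall (a b : R) f g, is_dual f -> is_dual g ->
     phi (fun x => a * f x + b * g x) = a * phi f + b * phi g) /\
  exists C : R, forall f, is_dual f ->
     (forall x : X, `|x| <= 1 -> `|f x| <= 1) -> `|phi f| <= C.

Definition reflexive_space : Prop :=
  forall phi, is_bidual phi -> exists x : X, forall f, is_dual f -> phi f = f x.

End Defs.

(* Main.v *)
Require Import Defs.
From HB Require Import structures.
From mathcomp Require Import all_boot all_order all_algebra.
From mathcomp Require Import all_classical all_reals all_analysis.
From mathcomp Require Import ring lra.
Import Order.TTheory GRing.Theory Num.Theory.
Import numFieldNormedType.Exports.
Local Open Scope classical_set_scope.
Local Open Scope ring_scope.

Section HBsec.
Variables (R : realType) (V : lmodType R).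
Variables (S : set V) (p : V -> R).
Hypothesis S0 : S 0.
Hypothesis Scomb : forall a b {u v}, S u -> S v -> S (a *: u + b *: v).
Hypothesis psub : forall {u v}, S u -> S v -> p (u + v) <= p u + p v.
Hypothesis phom : forall t {u}, 0 < t -> S u -> p (t *: u) = t * p u.

Definition good (G : set (V * R)) :=
  [/\ (forall v a b, G (v,a) -> G (v,b) -> a = b),
      (forall a b u x v y, G (u,x) -> G (v,y) -> G (a *: u + b *: v, a * x + b * y)),
      (forall v a, G (v,a) -> S v) &
      (forall v a, G (v,a) -> a <= p v)].

Lemma SD {u v} : S u -> S v -> S (u + v).
Proof. by move=> Su Sv; have := Scomb 1 1 Su Sv; rewrite !scale1r. Qed.
Lemma SZ t {u} : S u -> S (t *: u).
Proof. by move=> Su; have := Scomb t 0 Su S0; rewrite scaler0 addr0. Qed.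
Lemma SN {u} : S u -> S (- u).
Proof. by move=> Su; have := SZ (-1) Su; rewrite scaleN1r. Qed.
Lemma SB {u v} : S u -> S v -> S (u - v).
Proof. by move=> Su Sv; apply: SD => //; exact: SN. Qed.

Lemma good0 G u x : good G -> G (u, x) -> G (0, 0).
Proof.
rewrite /good => -[_ Hl _ _] Hu; have := Hl 0 0 u x u x Hu Hu.
by rewrite !scale0r !mul0r !addr0.
Qed.

Lemma good_ext G z : good G -> G (0,0) -> S z -> (forall a, ~ G (z, a)) ->
  exists c, good [set q | exists e a t, G (e,a) /\ q = (e + t *: z, a + t * c)].
Proof.
rewrite /good => -[Gf Gl GS Gp] G00 Sz nz.
pose E := [set r | exists e a, G (e,a) /\ r = a - p (e - z)].
have Ene : E !=set0 by exists (0 - p (0 - z)); exists 0, 0.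
have key : forall e a e' a', G (e,a) -> G (e',a') -> a - p (e - z) <= p (e' + z) - a'.
  move=> e a e' a' Hea Hea'.
  have := Gl 1 1 e a e' a' Hea Hea'; rewrite !scale1r !mul1r => Hs.
  have := Gp _ _ Hs.
  have -> : e + e' = (e - z) + (e' + z) by rewrite addrACA addNr addr0.
  move=> h; have := psub (SB (GS _ _ Hea) Sz) (SD (GS _ _ Hea') Sz).
  move=> h2; have := le_trans h h2; lra.
have ubE : has_ubound E.
  exists (p (0 + z) - 0) => r [e [a [Hea ->]]]; exact: key Hea G00.
pose c := sup E.
have Ec : forall e a, G (e,a) -> a - p (e - z) <= c.
  by move=> e a Hea; apply: ub_le_sup => //; exists e, a.
have cE : forall e a, G (e,a) -> c <= p (e + z) - a.
  by move=> e a Hea; apply: ge_sup => // r [e' [a' [Hea' ->]]]; exact: key Hea' Hea.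
exists c; split.
- move=> v a b [e [x [t [He [-> ->]]]]] [e' [x' [t' [He' [Hv ->]]]]].
  have [tt'|ntt'] := eqVneq t t'.
    subst t'; have ee' : e = e' by apply: (addIr (t *: z)).
    by subst e'; rewrite (Gf _ _ _ He He').
  exfalso.
  have H1 : e' - e = (t - t') *: z.
    have -> : e' = e + t *: z - t' *: z by rewrite Hv addrK.
    by rewrite scalerBl addrAC [e + _]addrC addrK.
  have k0 : t - t' != 0 by rewrite subr_eq0.
  have := Gl ((t - t')^-1) (- (t - t')^-1) e' x' e x He' He.
  have -> : (t - t')^-1 *: e' + - (t - t')^-1 *: e = z.
    by rewrite scaleNr -scalerBr H1 scalerA mulVf // scale1r.
  exact: nz.
- move=> a b u x v y [e1 [x1 [t1 [H1 [-> ->]]]]] [e2 [x2 [t2 [H2 [-> ->]]]]].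
  exists (a *: e1 + b *: e2), (a * x1 + b * x2), (a * t1 + b * t2); split.
    exact: Gl.
  congr pair; last by ring.
  by rewrite !scalerDr !scalerA scalerDl addrACA.
- by move=> v a [e [x [t [He [-> _]]]]]; apply: SD; [exact: GS He|exact: SZ].
- move=> v a [e [x [t [He [-> ->]]]]].
  have [tgt|tlt|->] := ltgtP t 0; last first.
  + by rewrite scale0r addr0 mul0r addr0; exact: Gp He.
  + have t0 : t != 0 by rewrite gt_eqF.
    have He2 := Gl (t^-1) 0 e x e x He He.
    rewrite scale0r addr0 mul0r addr0 in He2.
    have h := cE _ _ He2.
    have := ler_wpM2l (ltW tlt) h.
    rewrite mulrBr mulrA mulfV // mul1r.
    have -> : e + t *: z = t *: (t^-1 *: e + z).
      by rewrite scalerDr scalerA mulfV // scale1r.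
    rewrite phom //; last by apply: SD; [apply: SZ; exact: GS He|].
    lra.
  + have t0 : - t != 0 by rewrite oppr_eq0 lt_eqF.
    have st : 0 < - t by rewrite oppr_gt0.
    have He2 := Gl ((- t)^-1) 0 e x e x He He.
    rewrite scale0r addr0 mul0r addr0 in He2.
    have h := Ec _ _ He2.
    have := ler_wpM2l (ltW st) h.
    rewrite mulrBr mulrA mulfV // mul1r.
    have -> : e + t *: z = (- t) *: ((- t)^-1 *: e - z).
      by rewrite scalerBr scalerA mulfV // scale1r scaleNr opprK.
    rewrite phom //; last by apply: SB; [apply: SZ; exact: GS He|].
    lra.
Qed.

Theorem hahn_banach (G0 : set (V * R)) : good G0 -> G0 (0,0) ->
  exists g : V -> R, (forall v a, G0 (v,a) -> g v = a) /\
    (forall a b u v, S u -> S v -> g (a *: u + b *: v) = a * g u + b * g v) /\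
    (forall u, S u -> g u <= p u).
Proof.
move=> gG0 G00.
pose P := [set G | good G /\ G0 `<=` G] `|` [set set0].
have chains : forall F, F `<=` P -> total_on F subset -> P (\bigcup_(X in F) X).
  move=> F FP Ftot.
  have hF : forall G q, F G -> G q -> good G /\ G0 `<=` G.
    move=> G q FG Gq; case: (FP G FG) => // G0e.
    by rewrite G0e in Gq.
  have [[w [Gw [FGw Gww]]]|nw] := pselect (exists w, exists Gw, F Gw /\ Gw w); last first.
    rewrite /P; right; apply/seteqP; split => // q [G FG Gq]; exfalso; apply: nw.
    by exists q, G.
  rewrite /P; left; have [[gf gl gS gp] G0Gw] := hF _ _ FGw Gww; split; last first.
    by move=> q /G0Gw Gq; exists Gw.
  split.
  - move=> v a b [G1 F1 h1] [G2 F2 h2].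
    have [[f1 _ _ _] _] := hF _ _ F1 h1; have [[f2 _ _ _] _] := hF _ _ F2 h2.
    case: (Ftot _ _ F1 F2) => sub; [exact: f2 (sub _ h1) h2|exact: f1 h1 (sub _ h2)].
  - move=> a b u x v y [G1 F1 h1] [G2 F2 h2].
    have [[_ l1 _ _] _] := hF _ _ F1 h1; have [[_ l2 _ _] _] := hF _ _ F2 h2.
    case: (Ftot _ _ F1 F2) => sub.
      by exists G2 => //; apply: l2 => //; exact: sub.
    by exists G1 => //; apply: l1 => //; exact: sub.
  - move=> v a [G1 F1 h1]; have [[_ _ s1 _] _] := hF _ _ F1 h1; exact: s1 h1.
  - move=> v a [G1 F1 h1]; have [[_ _ _ p1] _] := hF _ _ F1 h1; exact: p1 h1.
have [A [PA Amax]] := Zorn_bigcup chains.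
have [goodA G0A] : good A /\ G0 `<=` A.
  case: PA => // A0; have {}A0 : A = set0 by exact: A0.
  exfalso; apply: (Amax G0); last by rewrite /P; left; split.
  rewrite A0; split; first exact: sub0set.
  by move=> sub; exact: (sub _ G00).
have A00 : A (0,0) by exact: G0A.
have full : forall z, S z -> exists a, A (z,a).
  move=> z Sz; apply: contrapT => nz.
  have nz' : forall a, ~ A (z,a) by move=> a h; apply: nz; exists a.
  have [c gB] := @good_ext A z goodA A00 Sz nz'.
  pose B := [set q | exists e a t, A (e,a) /\ q = (e + t *: z, a + t * c)].
  apply: (Amax B); last first.
    rewrite /P; left; split => //.
    move=> [e a] /G0A Hea; exists e, a, 0; split => //.
    by rewrite scale0r addr0 mul0r addr0.
  split.
      move=> [e a] Hea; exists e, a, 0; split => //.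
      by rewrite scale0r addr0 mul0r addr0.
    move=> sub; apply: (nz' c); apply: sub; exists 0, 0, 1; split => //.
    by rewrite scale1r add0r mul1r add0r.
pose g v := xget 0 [set a | A (v,a)].
have gA : forall v, S v -> A (v, g v) by move=> v Sv; exact: (xgetPex 0 (full v Sv)).
case: goodA => Af Al AS Ap.
exists g; split; [|split].
- move=> v a Hva; have Sv : S v by case: gG0 => _ _ s _; exact: s Hva.
  exact: Af (gA v Sv) (G0A _ Hva).
- move=> a b u v Su Sv.
  have Sc : S (a *: u + b *: v) by exact: Scomb.
  exact: Af (gA _ Sc) (Al a b _ _ _ _ (gA u Su) (gA v Sv)).
- by move=> u Su; exact: Ap (gA u Su).
Qed.

Theorem separation (D : set V) (y : V) :
  D 0 -> (forall a b u v, D u -> D v -> D (a *: u + b *: v)) -> D `<=` S ->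
  S y -> ~ D y -> (forall d t, D d -> t <= p (d + t *: y)) ->
  exists g : V -> R, g y = 1 /\ (forall d, D d -> g d = 0) /\
    (forall a b u v, S u -> S v -> g (a *: u + b *: v) = a * g u + b * g v) /\
    (forall u, S u -> g u <= p u).
Proof.
move=> D0 Dc DS Sy nDy Dp.
pose G0 := [set q | exists d t, D d /\ q = (d + t *: y, t)].
have gG0 : good G0.
  split.
  - move=> v a b [d [t [Dd [-> ->]]]] [d' [t' [Dd' [Hv ->]]]].
    apply: contrapT => ntt'; apply: nDy.
    have ntt : t - t' != 0 by rewrite subr_eq0; apply/eqP.
    have H1 : d' - d = (t - t') *: y.
      have -> : d' = d + t *: y - t' *: y by rewrite Hv addrK.
      by rewrite scalerBl addrAC [d + _]addrC addrK.
    have := Dc ((t - t')^-1) (- (t - t')^-1) d' d Dd' Dd.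
    by rewrite scaleNr -scalerBr H1 scalerA mulVf // scale1r.
  - move=> a b u x v z [d1 [t1 [D1 [-> ->]]]] [d2 [t2 [D2 [-> ->]]]].
    exists (a *: d1 + b *: d2), (a * t1 + b * t2); split; first exact: Dc.
    by rewrite !scalerDr !scalerA scalerDl addrACA.
  - move=> v a [d [t [Dd [-> _]]]]; apply: SD; [exact: DS|exact: SZ].
  - by move=> v a [d [t [Dd [-> ->]]]]; exact: Dp.
have G00 : G0 (0,0) by exists 0, 0; split => //; rewrite scale0r addr0.
have [g [gG [glin gp]]] := @hahn_banach G0 gG0 G00.
exists g; split; [|split] => //.
- by apply: gG; exists 0, 1; split => //; rewrite scale1r add0r.
- by move=> d Dd; apply: gG; exists d, 0; split => //; rewrite scale0r addr0.
Qed.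
End HBsec.
Section Op.
Variables (R : realType) (X : normedModType R).

Lemma dlin {f : X -> R} : is_dual f -> forall a b x y, f (a *: x + b *: y) = a * f x + b * f y.
Proof. by case. Qed.

Lemma dual0 {f : X -> R} : is_dual f -> f 0 = 0.
Proof.
move=> /dlin h; have := h 0 0 0 0; rewrite !scale0r !mul0r addr0 add0r; done.
Qed.

Lemma dual_comb {f g : X -> R} a b : is_dual f -> is_dual g ->
  is_dual (fun x => a * f x + b * g x).
Proof.
move=> [lf [C1 hC1]] [lg [C2 hC2]]; split.
  by move=> s t x y /=; rewrite lf lg; ring.
exists (`|a| * C1 + `|b| * C2) => x.
apply: (le_trans (ler_normD _ _)); rewrite !normrM mulrDl -!mulrA.
by apply: lerD; apply: ler_wpM2l => //.
Qed.

Lemma dual_zero : is_dual (fun _ : X => (0 : R)).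
Proof. by split; [move=> a b x y; ring|exists 0 => x; rewrite normr0 mul0r]. Qed.


Lemma dual_opp {f : X -> R} : is_dual f -> is_dual (fun x => - f x).
Proof.
move=> df; have := dual_comb (-1) 0 df df.
have -> // : (fun x => -1 * f x + 0 * f x) = (fun x => - f x).
by apply: funext => x; ring.
Qed.

Lemma cross {N : set (X * (X -> R))} : in_XXs N -> is_subspace N ->
  (forall p, N p -> pair_ p.1 p.2 = 0) ->
  forall {p q}, N p -> N q -> q.2 p.1 + p.2 q.1 = 0.
Proof.
move=> HN [_ Nc] Nsc p q Np Nq.
have := Nsc _ (Nc 1 1 p q Np Nq); rewrite /pair_ /=.
rewrite (dlin (HN _ Np)) (dlin (HN _ Nq)).
have := Nsc _ Np; have := Nsc _ Nq; rewrite /pair_ => h1 h2.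
lra.
Qed.

Lemma negB_adj (M : set (X * (X -> R))) : negB (adjoint M) = perp M.
Proof.
apply/seteqP; split.
- move=> q [r [[dr hr] ->]] /=; split; first exact: dual_opp.
  move=> p Mp; rewrite /pair_ /=.
  have := hr (p.1, fun x => - p.2 x); rewrite /pair_ /= => h.
  have := h (ex_intro _ p (conj Mp erefl)); lra.
- move=> [q1 q2] [dq hq]; exists (q1, fun x => - q2 x); split.
    split; first exact: dual_opp.
    move=> p' [p [Mp ->]]; rewrite /pair_ /=.
    have := hq p Mp; rewrite /pair_ /=; lra.
  by congr pair; apply: funext => x /=; rewrite opprK.
Qed.


Lemma ext (M : set (X * (X -> R))) : max_self_cancelling M ->
  forall q, perp M q -> q.2 q.1 = 0 -> M q.
Proof.
move=> [[HM [[M0 Mc] Msc]] Hmax] [q1 q2] [dq hq] /= qq; rewrite /= in dq hq.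
pose N := [set r | exists p t, M p /\ r = (p.1 + t *: q1, fun x => p.2 x + t * q2 x)].
have dN : in_XXs N.
  move=> r [p [t [Mp ->]]] /=.
  have := dual_comb 1 t (HM _ Mp) dq.
  by have -> : (fun x => 1 * p.2 x + t * q2 x) = (fun x => p.2 x + t * q2 x)
    by apply: funext => x; rewrite mul1r.
have sN : is_subspace N.
  split.
    exists (0, fun _ => 0), 0; split => //; congr pair; first by rewrite scale0r addr0.
    by apply: funext => x; rewrite mul0r addr0.
  move=> a b r1 r2 [p1 [t1 [M1 ->]]] [p2 [t2 [M2 ->]]] /=.
  exists (a *: p1.1 + b *: p2.1, fun x => a * p1.2 x + b * p2.2 x), (a * t1 + b * t2).
  split; first exact: Mc.
  congr pair; last by apply: funext => x /=; ring.
  by rewrite /= !scalerDr !scalerA scalerDl addrACA.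
have scN : forall r, N r -> pair_ r.1 r.2 = 0.
  move=> r [p [t [Mp ->]]]; rewrite /pair_ /=.
  have -> : p.1 + t *: q1 = 1 *: p.1 + t *: q1 by rewrite scale1r.
  rewrite (dlin (HM _ Mp)) (dlin dq).
  have h1 := Msc _ Mp; rewrite /pair_ in h1.
  have h2 := hq _ Mp; rewrite /pair_ /= in h2.
  rewrite h1 qq.
  have -> : q2 p.1 = - p.2 q1 by lra.
  ring.
have MN : M `<=` N.
  move=> [p1 p2] Mp; exists (p1, p2), 0; split => //.
  congr pair; first by rewrite /= scale0r addr0.
  by apply: funext => x /=; rewrite mul0r addr0.
have := Hmax N dN (conj dN (conj sN scN)) MN => <-.
exists (0, fun _ => 0), 1; split => //; congr pair; first by rewrite /= scale1r add0r.
by apply: funext => x /=; rewrite mul1r add0r.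
Qed.


Lemma part1 (M : set (X * (X -> R))) : in_XXs M -> is_subspace M ->
  skew_op M -> max_self_cancelling M.
Proof.
move=> HM sM; rewrite /skew_op negB_adj => sk.
have Msc : forall p, M p -> pair_ p.1 p.2 = 0.
  move=> p Mp; have Mp' : perp M p by rewrite -sk.
  have := Mp'.2 p Mp; lra.
split; first by split; [|split].
move=> N HN [_ [sN scN]] MN; apply/seteqP; split; last exact: MN.
move=> q Nq; rewrite sk; split; first exact: HN.
move=> p Mp; have := cross HN sN scN (MN _ Mp) Nq; rewrite /pair_; lra.
Qed.

Lemma dom_case (M : set (X * (X -> R))) : max_self_cancelling M ->
  forall q, perp M q -> dom_op M q.1 -> M q.
Proof.
move=> Hmax; have [[HM [[M0 Mc] Msc]] _] := Hmax.
move=> [q1 q2] [dq hq] [w Mw]; rewrite /= in dq hq Mw.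
have dw : is_dual w := HM _ Mw.
pose r := (0 : X, fun x => q2 x - w x).
have Mr : M r.
  apply: ext => //; last by rewrite /= (dual0 dq) (dual0 dw) subr0.
  split.
    have := dual_comb 1 (-1) dq dw.
    by have -> // : (fun x => 1 * q2 x + -1 * w x) = (fun x => q2 x - w x)
      by apply: funext => x; ring.
  move=> p Mp; rewrite /pair_ /=.
  have := hq _ Mp; have := cross HM (conj M0 Mc) Msc Mp Mw; rewrite /pair_ /=.
  rewrite (dual0 (HM _ Mp)); lra.
have := Mc 1 1 _ _ Mw Mr; rewrite /= scaler0 addr0 scale1r.
by have -> // : (fun x => 1 * w x + 1 * (q2 x - w x)) = q2 by apply: funext => x; ring.
Qed.

Lemma ran_case (M : set (X * (X -> R))) : max_self_cancelling M ->
  forall q, perp M q -> ran_op M q.2 -> M q.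
Proof.
move=> Hmax; have [[HM [[M0 Mc] Msc]] _] := Hmax.
move=> [q1 q2] [dq hq] [w Mw]; rewrite /= in dq hq Mw.
pose r := (q1 - w, fun _ : X => (0 : R)).
have Mr : M r.
  apply: ext => //; split; first exact: dual_zero.
  move=> p Mp; rewrite /pair_ /=.
  have := hq _ Mp; have := cross HM (conj M0 Mc) Msc Mw Mp; rewrite /pair_ /=.
  have -> : q1 - w = 1 *: q1 + (-1) *: w by rewrite scale1r scaleN1r.
  rewrite (dlin (HM _ Mp)); lra.
have := Mc 1 1 _ _ Mw Mr; rewrite /= !scale1r addrC subrK.
by have -> // : (fun x => 1 * q2 x + 1 * 0) = q2 by apply: funext => x; ring.
Qed.


Lemma dom_sep (M : set (X * (X -> R))) : max_self_cancelling M ->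
  closed (dom_op M) -> forall q, perp M q -> dom_op M q.1.
Proof.
move=> Hmax Dcl; have [[HM [[M0 Mc] Msc]] _] := Hmax.
move=> [y ys] [dq hq] /=; rewrite /= in dq hq.
apply: contrapT => nDy.
have D0 : dom_op M 0 by exists (fun _ => 0).
have Dc : forall a b u v, dom_op M u -> dom_op M v -> dom_op M (a *: u + b *: v).
  move=> a b u v [wu Mu] [wv Mv]; exists (fun x => a * wu x + b * wv x).
  exact: (Mc a b _ _ Mu Mv).
have [e [e0 He]] : exists e : R, 0 < e /\ forall d, dom_op M d -> e <= `|y - d|.
  apply: contrapT => H; apply: nDy; apply: Dcl => B.
  rewrite -nbhs_nbhs_norm => -[r /= r0 rB].
  apply: contrapT => nd; apply: H; exists r; split => // d Dd.
  rewrite leNgt; apply/negP => lt; apply: nd; exists d; split => //.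
  by apply: rB.
have einv0 : 0 <= e^-1 by rewrite invr_ge0 ltW.
have S0 : (@setT X) 0 by [].
have Sc : forall a b (u v : X), setT u -> setT v -> (@setT X) (a *: u + b *: v) by [].
have ps : forall u v : X, setT u -> setT v ->
    e^-1 * `|u + v| <= e^-1 * `|u| + e^-1 * `|v|.
  by move=> u v _ _; rewrite -mulrDr ler_wpM2l // ler_normD.
have ph : forall t (u : X), 0 < t -> setT u -> e^-1 * `|t *: u| = t * (e^-1 * `|u|).
  by move=> t u t0 _; rewrite normrZ gtr0_norm // mulrCA.
have Dp : forall d t, dom_op M d -> t <= e^-1 * `|d + t *: y|.
  move=> d t Dd; have [->|t0] := eqVneq t 0.
    by rewrite scale0r addr0 mulr_ge0.
  have Dd' : dom_op M (- t^-1 *: d) by have := Dc (- t^-1) 0 _ _ Dd Dd; rewrite scale0r addr0.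
  have h := He _ Dd'.
  have -> : d + t *: y = t *: (y - (- t^-1 *: d)).
    by rewrite scaleNr opprK scalerDr scalerA mulfV // scale1r addrC.
  rewrite normrZ -(ler_pM2l e0) mulrA mulfV ?gt_eqF // mul1r.
  apply: (le_trans (ler_wpM2l (ltW e0) (ler_norm t))).
  by rewrite mulrC ler_wpM2l.
have [g [g1 [gD [glin gp]]]] :=
  @separation R X setT (fun v => e^-1 * `|v|) S0 Sc ps ph (dom_op M) y D0 Dc
    (fun _ _ => I) I nDy Dp.
have dg : is_dual g.
  split; first by move=> a b u v; exact: glin.
  exists e^-1 => x; rewrite ler_norml; apply/andP; split; last exact: gp.
  have := gp (- x) I; rewrite normrN.
  have -> : - x = (-1) *: x + 0 *: x by rewrite scale0r addr0 scaleN1r.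
  rewrite glin // mul0r addr0 mulN1r; lra.
have M0g : M (0, g).
  apply: ext => //; last by rewrite /= (dual0 dg).
  split => // -[p1 p2] Mp; rewrite /pair_ /=.
  by rewrite gD; [rewrite (dual0 (f:=p2) (HM _ Mp)) addr0|exists p2].
have := hq _ M0g; rewrite /pair_ /= g1 (dual0 dq) add0r => /eqP.
by rewrite oner_eq0.
Qed.

Lemma fctE (a b : R) (f g : X -> R) x : (a *: f + b *: g) x = a * f x + b * g x.
Proof. by []. Qed.

Lemma dualV {f g : X -> R} a b : is_dual f -> is_dual g -> is_dual (a *: f + b *: g).
Proof. exact: dual_comb. Qed.

Definition nd (f : X -> R) := sup [set r | exists x : X, `|x| <= 1 /\ r = `|f x|].

Lemma nd_ub {f} x : is_dual f -> `|x| <= 1 -> `|f x| <= nd f.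
Proof.
move=> [_ [C hC]] hx; apply: ub_le_sup; last by exists x.
exists `|C| => r [z [hz ->]]; apply: (le_trans (hC z)).
apply: (le_trans (ler_wpM2r (normr_ge0 z) (ler_norm C))).
by rewrite -[leRHS]mulr1 ler_wpM2l.
Qed.

Lemma nd_le f c : (forall x : X, `|x| <= 1 -> `|f x| <= c) -> nd f <= c.
Proof.
move=> h; apply: ge_sup; first by exists `|f 0|, 0; rewrite normr0.
by move=> r [z [hz ->]]; exact: h.
Qed.

Lemma nd_ge0 f : is_dual f -> 0 <= nd f.
Proof. by move=> df; apply: (le_trans (normr_ge0 (f 0))); apply: nd_ub; rewrite ?normr0. Qed.

Lemma ran_sep (M : set (X * (X -> R))) : max_self_cancelling M ->
  dual_closed (ran_op M) -> reflexive_space X ->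
  forall q, perp M q -> ran_op M q.2.
Proof.
move=> Hmax Dcl Hrefl; have [[HM [[M0 Mc] Msc]] _] := Hmax.
move=> [y ys] [dq hq] /=; rewrite /= in dq hq.
apply: contrapT => nDy.
have D0 : ran_op M 0 by exists 0.
have Dc : forall a b (u v : X -> R), ran_op M u -> ran_op M v -> ran_op M (a *: u + b *: v).
  move=> a b u v [xu Mu] [xv Mv]; exists (a *: xu + b *: xv).
  exact: (Mc a b _ _ Mu Mv).
have DS : ran_op M `<=` (@is_dual R X) by move=> f [x Mx]; exact: (HM _ Mx).
have [e [e0 He]] : exists e : R, 0 < e /\ forall g, ran_op M g ->
    exists x : X, `|x| <= 1 /\ e < `|ys x - g x|.
  apply: contrapT => H; apply: nDy; apply: Dcl => // eps eps0.
  apply: contrapT => H2; apply: H; exists eps; split => // g Rg.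
  apply: contrapT => H3; apply: H2; exists g; split => // x hx.
  rewrite leNgt; apply/negP => lt; apply: H3; exists x; split => //.
have einv0 : 0 <= e^-1 by rewrite invr_ge0 ltW.
have S0 : (@is_dual R X) 0 by exact: dual_zero.
have Sc : forall a b (u v : X -> R), is_dual u -> is_dual v -> is_dual (a *: u + b *: v).
  by move=> a b u v; exact: dualV.
have ps : forall u v : X -> R, is_dual u -> is_dual v ->
    e^-1 * nd (u + v) <= e^-1 * nd u + e^-1 * nd v.
  move=> u v du dv; rewrite -mulrDr ler_wpM2l //; apply: nd_le => x hx /=.
  apply: (le_trans (ler_normD _ _)); apply: lerD; exact: nd_ub.
have ph : forall t (u : X -> R), 0 < t -> is_dual u -> e^-1 * nd (t *: u) = t * (e^-1 * nd u).
  move=> t u t0 du; rewrite mulrCA; congr (_ * _).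
  have dtu : is_dual (t *: u) by have := dualV t 0 du du; rewrite scale0r addr0.
  apply/eqP; rewrite eq_le; apply/andP; split.
    apply: nd_le => x hx /=; rewrite normrM gtr0_norm // ler_pM2l //.
    exact: nd_ub.
  rewrite -ler_pdivlMl //; apply: nd_le => x hx.
  rewrite ler_pdivlMl //; have := nd_ub x dtu hx; rewrite /= normrM gtr0_norm //.
have Dp : forall d t, ran_op M d -> t <= e^-1 * nd (d + t *: ys).
  move=> d t Dd; have [->|t0] := eqVneq t 0.
    by rewrite scale0r addr0 mulr_ge0 // nd_ge0 //; exact: DS.
  have Dd' : ran_op M (- t^-1 *: d) by have := Dc (- t^-1) 0 _ _ Dd Dd; rewrite scale0r addr0.
  have [x [hx h]] := He _ Dd'.
  have dd : is_dual (d + t *: ys) by have := dualV 1 t (DS _ Dd) dq; rewrite scale1r.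
  have := nd_ub x dd hx.
  have -> : (d + t *: ys) x = t * (ys x - (- t^-1 *: d) x).
    change (d x + t * ys x = t * (ys x - (- t^-1 * d x))).
    by rewrite mulNr opprK mulrDr mulrA mulfV // mul1r addrC.
  rewrite normrM => h2.
  rewrite -(ler_pM2l e0) mulrA mulfV ?gt_eqF // mul1r.
  apply: (le_trans (ler_wpM2l (ltW e0) (ler_norm t))).
  apply: le_trans h2; rewrite mulrC ler_wpM2l //; exact: ltW.
have [g [g1 [gD [glin gp]]]] :=
  @separation R (X -> R) (@is_dual R X) (fun v => e^-1 * nd v) S0 Sc ps ph
    (ran_op M) ys D0 Dc DS dq nDy Dp.
have gN : forall f, is_dual f -> g ((-1) *: f + 0 *: f) = - g f.
  by move=> f df; rewrite glin // mul0r addr0 mulN1r.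
have bid : is_bidual g.
  split.
    move=> a b f h df dh.
    have -> : (fun x => a * f x + b * h x) = a *: f + b *: h by [].
    exact: glin.
  exists e^-1 => f df hf; rewrite ler_norml; apply/andP; split.
    have dnf : is_dual ((-1) *: f + 0 *: f) by exact: dualV.
    have := gp _ dnf; rewrite gN //.
    have : nd ((-1) *: f + 0 *: f) <= 1.
      apply: nd_le => x hx; rewrite fctE mul0r addr0 mulN1r normrN; exact: hf.
    move=> h1 h2; rewrite lerNl; apply: (le_trans h2).
    by rewrite -[leRHS]mulr1 ler_wpM2l.
  apply: (le_trans (gp _ df)); rewrite -[leRHS]mulr1 ler_wpM2l //.
  exact: nd_le.
have [x0 hx0] := Hrefl g bid.
have Mx0 : M (x0, fun _ => 0).
  apply: ext => //; split; first exact: dual_zero.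
  move=> -[p1 p2] Mp; rewrite /pair_ /=.
  by rewrite -hx0 ?gD ?addr0 //; [exists p1|exact: (HM _ Mp)].
have := hq _ Mx0; rewrite /pair_ /= -hx0 // g1 addr0 => /eqP.
by rewrite oner_eq0.
Qed.

End Op.

Lemma skew_of (R : realType) (X : normedModType R) (M : set (X * (X -> R))) :
  max_self_cancelling M -> (forall q, perp M q -> M q) -> skew_op M.
Proof.
move=> [[HM [[M0 Mc] Msc]] _] H; rewrite /skew_op negB_adj.
apply/seteqP; split; last exact: H.
move=> p Mp; split; first exact: HM.
move=> r Mr; have := @cross R X M HM (conj M0 Mc) Msc r p Mr Mp; rewrite /pair_; lra.
Qed.

Theorem lemma7 (R : realType) (X : completeNormedModType R)
  (M : set (X * (X -> R))) (HM : in_XXs M) (Hsub : is_subspace M) :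
  (skew_op M -> max_self_cancelling M) /\
  (max_self_cancelling M -> closed (dom_op M) -> skew_op M) /\
  (max_self_cancelling M -> dual_closed (ran_op M) -> reflexive_space X -> skew_op M).
Proof.
split; first exact: part1.
split.
- move=> Hmax Dcl; apply: skew_of => // q Pq.
  by apply: dom_case => //; exact: dom_sep.
- move=> Hmax Dcl Hr; apply: skew_of => // q Pq.
  by apply: ran_case => //; exact: ran_sep.
Qed.
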